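(* Let $R$ be a ring and $x\in J(R)$, the Jacobson radical of $R$. Then $H^1_x(R)=0$ if and only if $x$ is nilpotent.
   Context: All rings are commutative with identity. $H^1_x(R)$ is the first cohomology of the complex $0\to R\to R_x\to0$ ($R$ in degree $0$, natural localization map), i.e. $H^1_x(R)=R_x/\operatorname{im}(R\to R_x)$. *)

(* Defs.v *)
From mathcomp Require Import all_boot all_algebra.
Set Implicit Arguments. Unset Strict Implicit. Unset Printing Implicit Defensive.
Import GRing.Theory.
Local Open Scope ring_scope.

Definition is_ideal (R : comPzRingType) (I : R -> Prop) : Prop :=
  [/\ I 0,
      (forall a b, I a -> I b -> I (a + b)) &
      (forall r a, I a -> I (r * a))].

Definition is_maximal_ideal (R : comPzRingType) (M : R -> Prop) : Prop :=
  [/\ is_ideal M, ~ M 1 &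
      (forall J : R -> Prop, is_ideal J -> (forall a, M a -> J a) ->
         ~ J 1 -> forall a, J a -> M a)].

Definition jacobson (R : comPzRingType) (x : R) : Prop :=
  forall M : R -> Prop, is_maximal_ideal M -> M x.

(* The localization R_x: elements are fractions a / x^n, represented by
   pairs (a, n), with (a, n) ~ (b, m) iff x^k (a x^m - b x^n) = 0 for some k. *)
Definition loc_eq (R : comPzRingType) (x : R) (p q : R * nat) : Prop :=
  exists k : nat, x ^+ k * (p.1 * x ^+ q.2 - q.1 * x ^+ p.2) = 0.

Definition loc_map (R : comPzRingType) (x : R) (r : R) : R * nat := (r, 0%N).

(* H^1_x(R) = R_x / im(R -> R_x) vanishes iff the map R -> R_x is surjective. *)
Definition H1_vanishes (R : comPzRingType) (x : R) : Prop :=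
  forall f : R * nat, exists r : R, loc_eq x f (loc_map x r).

Definition nilpotent (R : comPzRingType) (x : R) : Prop :=
  exists n : nat, x ^+ n = 0.

(* Main.v *)
Require Import Defs.
From mathcomp Require Import all_boot all_algebra.
From mathcomp Require Import boolp classical_sets.
Import GRing.Theory.

Section Aux.
Local Open Scope ring_scope.

Lemma exists_max (R : comPzRingType) (c : R) :
  ~ (exists s, s * c = 1) -> exists M : R -> Prop, is_maximal_ideal M /\ M c.
Proof.
move=> nu.
pose P := fun J : set R => [/\ ~ J 1, (forall a b, J a -> J b -> J (a + b)),
   (forall r a, J a -> J (r * a)) & (forall a, J a -> J c)].
have [A [[A1 AD AM Ac] Amax]] : exists A, P A /\ forall B, (A `<` B)%classic -> ~ P B.
  apply: Zorn_bigcup => F FP Ftot; split.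
  - by case=> X FX X1; have [] := FP X FX.
  - move=> a b [X FX Xa] [Y FY Yb].
    have [XY|YX] := Ftot X Y FX FY.
      by exists Y => //; have [_ H _ _] := FP Y FY; apply: H => //; apply: XY.
    by exists X => //; have [_ H _ _] := FP X FX; apply: H => //; apply: YX.
  - by move=> r a [X FX Xa]; exists X => //; have [_ _ H _] := FP X FX; apply: H.
  - by move=> a [X FX Xa]; exists X => //; have [_ _ _ H] := FP X FX; apply: H Xa.
pose I0 := fun a : R => exists s, a = s * c.
have PI0 : P I0.
  split.
  - by case=> s /esym E; apply: nu; exists s.
  - by move=> a b [s ->] [t ->]; exists (s + t); rewrite mulrDl.
  - by move=> r a [s ->]; exists (r * s); rewrite mulrA.
  - by move=> a _; exists 1; rewrite mul1r.
have Ac' : A c.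
  apply: contrapT => nAc.
  have nA : forall a, ~ A a by move=> a /Ac.
  apply: (Amax I0) => //; split.
    by move=> a Aa; case: (nA a Aa).
  by move=> sub; apply: (nA c); apply: sub; exists 1; rewrite mul1r.
have A0 : A 0 by have := AM 0 c Ac'; rewrite mul0r.
exists A; split => //; split; [by split | by [] | ].
move=> J [J0 JD JM] AJ nJ1 a Ja.
apply: contrapT => nAa.
apply: (Amax J).
  by split => // sub; apply: nAa; apply: sub.
by split => // b _; apply: AJ.
Qed.

End Aux.

Theorem lemma3p3 (R : comPzRingType) (x : R) (hx : jacobson x) :
  H1_vanishes x <-> nilpotent x.
Proof.
split; last first.
  move=> [n xn] [a m]; exists 0%R; exists n => /=.
  by rewrite GRing.mul0r GRing.subr0 GRing.expr0 GRing.mulr1 xn GRing.mul0r.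
move=> /(_ (1%R, 1%N)) [r [k /=]].
rewrite expr0 expr1 !mulr1 => E.
have [[s sc]|nu] := pselect (exists s, (s * (1 - r * x) = 1)%R).
  exists k; by rewrite -[(x ^+ k)%R]mulr1 -sc mulrCA E mulr0.
have [M [Mm Mc]] := @exists_max R _ nu.
have Mx := hx M Mm.
case: Mm => [[M0 MD MM] M1 _].
apply: False_ind; apply: M1.
have := MD _ _ Mc (MM r x Mx); by rewrite subrK.
Qed.
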